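(* Let $\rho$ be a density operator with purity $\wp=\operatorname{tr}(\rho^2)$ and $O$ a traceless Hermitian operator on $\mathcal H$, and let $V_\triangle(O)=\max_\rho V_\triangle(O,\rho)$. Then $$V_\triangle(O,\rho)\le\frac{2(d+1)}{d(d+2)}\sqrt{2^{-\tilde M_2(\rho)}d\wp\|\Xi_O\|_4^4},\qquad V_\triangle(O,\rho)\le\frac{2(d+1)}{d+2}\|\Xi_{\mathring\rho}\|_\infty^2\|O\|_2^2,$$ $$V_\triangle(O)\le\frac{2(d+1)}{d(d+2)}\|\Xi_O^2\|_{[d]}\le\frac{2(d+1)}{d+2}\|O\|_2^2.$$ If moreover $O=|\phi\rangle\langle\phi|-\mathbb 1/d$ for a pure state $|\phi\rangle$, then $V_\triangle(O)<\frac{2^{1-M_2(\phi)/2}(d+1)}{d+2}$ and $$2^{1-M_2(\phi)}-\frac5d<V_\triangle(O,\phi)=\frac{[2^{1-M_2(\phi)}d^2-3d+1](d+1)}{d^2(d+2)}<2^{1-M_2(\phi)}-\frac2d.$$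
   Context: $n\ge1$, $d=2^n$, $\mathcal H=(\mathbb C^2)^{\otimes n}$. Let $\overline{\mathcal P}_n=\{I,X,Y,Z\}^{\otimes n}$. For operators $A,B$ define functions on $\overline{\mathcal P}_n$ regarded as vectors in $\mathbb R^{d^2}$ (with $\ell_p$ norms and standard inner product): $\Xi_A(P)=\operatorname{tr}(AP)$, $\Xi_{A,B}(P)=\operatorname{tr}(AP)\operatorname{tr}(BP)$, $\tilde\Xi_{A,B}(P)=\operatorname{tr}(APBP)$. $V_\triangle(O,\rho)=\frac{d+1}{d(d+2)}\bigl(\|\Xi_{\rho,O}\|_2^2+\tilde\Xi_{\rho,O}\cdot\Xi_{\rho,O}\bigr)$; $V_\triangle(O,\phi)=V_\triangle(O,|\phi\rangle\langle\phi|)$. $\mathring\rho=\rho-\mathbb 1/d$. $\|\Xi_O^2\|_{[d]}$ is the sum of the $d$ largest values of $\Xi_O(P)^2$. $\tilde M_2(\rho)=-\log_2\frac{\|\Xi_\rho\|_4^4}{d\operatorname{tr}(\rho^2)}$, and for a pure state $M_2(\phi)=\tilde M_2(|\phi\rangle\langle\phi|)$. $\|O\|_2$ is the Hilbert–Schmidt norm. *)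

(* Defs.v *)
From HB Require Import structures.
From mathcomp Require Import all_boot all_order all_algebra.
From mathcomp Require Import all_classical all_reals all_analysis.
From mathcomp Require Import complex.
Set Implicit Arguments. Unset Strict Implicit. Unset Printing Implicit Defensive.
Import Order.TTheory GRing.Theory Num.Theory.
Local Open Scope ring_scope.
Local Open Scope classical_set_scope.

Section QDefs.
Variable R : realType.
Local Notation C := (R[i]).

(* n-qubit Pauli strings P in {I,X,Y,Z}^{(x) n}: a label in 'I_4 per qubit,
   0 = I, 1 = X, 2 = Y, 3 = Z. *)
Definition pauli_label (n : nat) := {ffun 'I_n -> 'I_4}.

(* single-qubit Pauli matrix entries, computational basis |0>,|1> = false,true *)
Definition pauli1 (a : 'I_4) (b c : bool) : C :=
  match nat_of_ord a with
  | 0%N => if b == c then 1 else 0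
  | 1%N => if b == c then 0 else 1
  | 2%N => if b == c then 0 else (if b then 'i else - 'i)
  | _ => if b == c then (if b then -1 else 1) else 0
  end.

Definition qbit (k i : nat) : bool := odd (i %/ 2 ^ k).

(* The Pauli operator P = sigma_{P 0} (x) ... (x) sigma_{P (n-1)} on (C^2)^{(x) n},
   written entrywise (Kronecker product in the computational basis). *)
Definition pauli (n : nat) (P : pauli_label n) : 'M[C]_(2 ^ n) :=
  \matrix_(i, j) \prod_(k < n) pauli1 (P k) (qbit k i) (qbit k j).

Definition dagger (m p : nat) (A : 'M[C]_(m, p)) : 'M[C]_(p, m) := (map_mx conjc A)^T.

Definition herm_op (n : nat) (A : 'M[C]_(2 ^ n)) : Prop := dagger A = A.

Definition density_op (n : nat) (rho : 'M[C]_(2 ^ n)) : Prop :=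
  herm_op rho /\ (forall v : 'cV[C]_(2 ^ n), 0 <= (dagger v *m rho *m v) 0 0)
  /\ \tr rho = 1.

Definition unit_vec (n : nat) (phi : 'cV[C]_(2 ^ n)) : Prop := (dagger phi *m phi) 0 0 = 1.
Definition ketbra (n : nat) (phi : 'cV[C]_(2 ^ n)) : 'M[C]_(2 ^ n) := phi *m dagger phi.

Definition qdim (n : nat) : R := (2 ^ n)%:R.

(* the functions Xi on Pauli strings (real-valued; for Hermitian arguments
   the traces below are real, so taking the real part loses nothing) *)
Definition Xi n (A : 'M[C]_(2 ^ n)) (P : pauli_label n) : R :=
  complex.Re (\tr (A *m pauli P)).
Definition Xi2 n (A B : 'M[C]_(2 ^ n)) (P : pauli_label n) : R := Xi A P * Xi B P.
Definition tXi n (A B : 'M[C]_(2 ^ n)) (P : pauli_label n) : R :=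
  complex.Re (\tr (A *m pauli P *m B *m pauli P)).

Definition dotP n (f g : pauli_label n -> R) : R := \sum_(P : pauli_label n) f P * g P.
Definition norm2sq n (f : pauli_label n -> R) : R := \sum_(P : pauli_label n) f P ^+ 2.
Definition norm4pow4 n (f : pauli_label n -> R) : R := \sum_(P : pauli_label n) f P ^+ 4.
Definition norminf n (f : pauli_label n -> R) : R :=
  \big[Num.max/0]_(P : pauli_label n) `|f P|.
(* ||f^2||_[d]: sum of the d largest values of f(P)^2 *)
Definition topd n (f : pauli_label n -> R) : R :=
  \big[Num.max/0]_(S : {set pauli_label n} | #|S| == (2 ^ n)%N)
     \sum_(P in S) f P ^+ 2.

Definition Vtri n (O rho : 'M[C]_(2 ^ n)) : R :=
  (qdim n + 1) / (qdim n * (qdim n + 2)) *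
  (norm2sq (Xi2 rho O) + dotP (tXi rho O) (Xi2 rho O)).

Definition Vmax n (O : 'M[C]_(2 ^ n)) : R :=
  sup [set Vtri O rho | rho in [set rho | density_op rho]].

Definition purity n (rho : 'M[C]_(2 ^ n)) : R := complex.Re (\tr (rho *m rho)).

Definition qlog2 (x : R) : R := ln x / ln 2.

Definition M2t n (rho : 'M[C]_(2 ^ n)) : R :=
  - qlog2 (norm4pow4 (Xi rho) / (qdim n * purity rho)).

Definition M2 n (phi : 'cV[C]_(2 ^ n)) : R := M2t (ketbra phi).

Definition ringed n (rho : 'M[C]_(2 ^ n)) : 'M[C]_(2 ^ n) :=
  rho - (real_complex R ((qdim n)^-1))%:M.

Definition hs_norm n (O : 'M[C]_(2 ^ n)) : R := Num.sqrt (complex.Re (\tr (dagger O *m O))).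

End QDefs.

(* Main.v *)
Require Import Defs.
From HB Require Import structures.
From mathcomp Require Import all_boot all_order all_algebra.
From mathcomp Require Import all_classical all_reals all_analysis.
From mathcomp Require Import complex.
From mathcomp Require Import ring lra.
Import Order.TTheory GRing.Theory Num.Theory.
Local Open Scope ring_scope.

Module Helpers.
Set Implicit Arguments. Unset Strict Implicit. Unset Printing Implicit Defensive.

Lemma qbit0 i : qbit 0 i = odd i.
Proof. by rewrite /qbit expn0 divn1. Qed.

Lemma qbitS k i : qbit k.+1 i = qbit k i./2.
Proof. by rewrite /qbit expnS divnMA divn2. Qed.

Lemma bits_eq_nat n : forall i j, (i < 2 ^ n)%N -> (j < 2 ^ n)%N ->
  (forall k, (k < n)%N -> qbit k i = qbit k j) -> i = j.
Proof.
elim: n => [|n IH] i j.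
  by rewrite expn0 !ltnS !leqn0 => /eqP -> /eqP ->.
move=> hi hj hk.
have h0 : odd i = odd j by rewrite -!qbit0; apply: hk.
have h2 : i./2 = j./2.
  apply: IH.
  - by rewrite -divn2 ltn_divLR // -expnSr.
  - by rewrite -divn2 ltn_divLR // -expnSr.
  by move=> k hk'; rewrite -!qbitS; apply: hk.
by rewrite -(odd_double_half i) -(odd_double_half j) h0 h2.
Qed.

Section Bits.
Variable n : nat.
Definition bits (i : 'I_(2 ^ n)) : {ffun 'I_n -> bool} := [ffun k : 'I_n => qbit k i].

Lemma bits_inj : injective bits.
Proof.
move=> i j /ffunP h; apply: val_inj; apply: (@bits_eq_nat n) => //; try exact: ltn_ord.
by move=> k hk; have := h (Ordinal hk); rewrite !ffunE.
Qed.

Lemma bits_bij : bijective bits.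
Proof.
apply: inj_card_bij; first exact: bits_inj.
rewrite card_ffun card_bool !card_ord //.
Qed.

Lemma sum_bits (V : nmodType) (F : {ffun 'I_n -> bool} -> V) :
  \sum_(i : 'I_(2 ^ n)) F (bits i) = \sum_f F f.
Proof.
rewrite (reindex bits) //; exact: onW_bij bits_bij.
Qed.

Lemma sum_prod_bits (V : comNzRingType) (g : 'I_n -> bool -> V) :
  \sum_(i : 'I_(2 ^ n)) \prod_(k < n) g k (qbit k i) = \prod_(k < n) \sum_(b : bool) g k b.
Proof.
rewrite bigA_distr_bigA /= -sum_bits; apply: eq_bigr => i _.
by apply: eq_bigr => k _; rewrite ffunE.
Qed.

Lemma prod_eqbits (V : comNzRingType) (i j : 'I_(2 ^ n)) :
  \prod_(k < n) (((qbit k i == qbit k j) : nat)%:R : V) = ((i == j) : nat)%:R.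
Proof.
case: (eqVneq i j) => [->|hij].
  by rewrite big1 // => k _; rewrite eqxx.
have hb : bits i != bits j by apply: contra_neq hij; exact: bits_inj.
have [k hk] : exists k, bits i k != bits j k.
  apply/existsP; apply: contraR hb => /existsPn h.
  by apply/eqP/ffunP => k; apply/eqP; have := h k; rewrite negbK.
rewrite !ffunE in hk.
by rewrite (bigD1 k) //= (negbTE hk) mul0r.
Qed.
End Bits.

Section Single.
Variable R : realType.
Local Notation C := R[i].
Local Notation p1 := (pauli1 R).
Lemma ii : 'i * 'i = -1 :> C. Proof. by rewrite -expr2 sqrCi. Qed.
Definition chi1 (a b : 'I_4) : R :=
  if (a == 0%N :> nat) || (b == 0%N :> nat) || (a == b) then 1 else -1.

Lemma s4 (a a' : 'I_4) x y :
  \sum_(b : bool) \sum_(c : bool) p1 a x b * p1 a' b c * p1 a c y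
   = real_complex R (chi1 a a') * p1 a' x y.
Proof.
case: a => [[|[|[|[|a]]]] Ha] //; case: a' => [[|[|[|[|a']]]] Ha'] //;
rewrite /chi1 /pauli1 /= !big_bool /=; case: x; case: y => /=;
rewrite ?(mulr0,mul0r,mulr1,mul1r,addr0,add0r,mulrN,mulNr,opprK,ii,mulrNN); try ring.
Qed.

Lemma s1 b c e f : \sum_(a < 4) p1 a b c * p1 a e f
   = 2 * (((b == f) : nat)%:R * ((c == e) : nat)%:R).
Proof.
rewrite !big_ord_recl big_ord0 /pauli1 /=.
case: b; case: c; case: e; case: f => /=;
rewrite ?(mulr0,mul0r,mulr1,mul1r,addr0,add0r,mulrN,mulNr,opprK,ii,mulrNN); try ring.
Qed.

Lemma s2 (a : 'I_4) : \sum_(b : bool) p1 a b b = 2 * ((a == ord0) : nat)%:R.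
Proof.
case: a => [[|[|[|[|a]]]] Ha] //; rewrite /pauli1 !big_bool /=; try ring.
Qed.

Lemma s5 (q r : 'I_4) : \sum_(a < 4) chi1 a q * chi1 a r = 4 * ((q == r) : nat)%:R.
Proof.
case: q => [[|[|[|[|q]]]] Hq] //; case: r => [[|[|[|[|r]]]] Hr] //;
rewrite !big_ord_recl big_ord0 /chi1 /=; try ring.
Qed.

Lemma s6 b c : p1 ord0 b c = ((b == c) : nat)%:R.
Proof. by rewrite /pauli1 /=; case: (b == c). Qed.

Lemma s3 (a : 'I_4) b c : conjc (p1 a b c) = p1 a c b.
Proof.
case: a => [[|[|[|[|a]]]] Ha] //; rewrite /pauli1 /=; case: b; case: c => /=;
  rewrite -?complexiE //=; try (apply/eqP; rewrite eq_complex /= ?oppr0 ?opprK ?eqxx //).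
Qed.
End Single.

Lemma sum_delta (V : nmodType) (I : finType) (F : I -> V) (x : I) :
  \sum_i (if i == x then F i else 0) = F x.
Proof. by rewrite -big_mkcond big_pred1_eq. Qed.

Lemma prod_eq_ffun (V : comNzRingType) (I : finType) (T : eqType) (f g : {ffun I -> T}) :
  \prod_k (((f k == g k) : nat)%:R : V) = ((f == g) : nat)%:R.
Proof.
case: (eqVneq f g) => [->|hfg].
  by rewrite big1 // => k _; rewrite eqxx.
have [k hk] : exists k, f k != g k.
  apply/existsP; apply: contraR hfg => /existsPn h.
  by apply/eqP/ffunP => k; apply/eqP; have := h k; rewrite negbK.
by rewrite (bigD1 k) //= (negbTE hk) mul0r.
Qed.

Section Multi.
Variable R : realType.
Variable n : nat.
Local Notation C := R[i].
Local Notation p1 := (pauli1 R).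
Local Notation pl := (pauli_label n).
Local Notation P_ := (@pauli R n).
Local Notation N := (2 ^ n)%N.

Lemma pauliE (P : pl) i j : P_ P i j = \prod_(k < n) p1 (P k) (qbit k i) (qbit k j).
Proof. by rewrite mxE. Qed.

Lemma sum2_prod_bits (g : 'I_n -> bool -> bool -> C) :
  \sum_(u : 'I_N) \sum_(v : 'I_N) \prod_(k < n) g k (qbit k u) (qbit k v)
  = \prod_(k < n) \sum_(b : bool) \sum_(c : bool) g k b c.
Proof.
rewrite -(sum_prod_bits (fun k b => \sum_(c : bool) g k b c)).
apply: eq_bigr => u _; exact: sum_prod_bits.
Qed.

Definition lab0 : pl := [ffun => ord0].

Lemma pauli0 : P_ lab0 = 1%:M.
Proof.
apply/matrixP => i j; rewrite pauliE !mxE.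
under eq_bigr => k _ do rewrite ffunE s6.
by rewrite prod_eqbits.
Qed.

Lemma pauli_compl i j k l :
  \sum_(P : pl) P_ P i j * P_ P k l
  = (N%:R : C) * (((i == l) : nat)%:R * ((j == k) : nat)%:R).
Proof.
under eq_bigr => P _ do rewrite !pauliE -big_split /=.
rewrite -(bigA_distr_bigA (fun (m : 'I_n) a => p1 a (qbit m i) (qbit m j) * p1 a (qbit m k) (qbit m l))) /=.
under eq_bigr => m _ do rewrite s1.
rewrite !big_split /= prodr_const card_ord natrX.
by rewrite (prod_eqbits _ i l) (prod_eqbits _ j k).
Qed.

Definition hat (A : 'M[C]_N) (P : pl) : C := \tr (A *m P_ P).

Lemma hatE A Q : hat A Q = \sum_i \sum_j A i j * P_ Q j i.
Proof. by rewrite /hat /mxtrace; apply: eq_bigr => i _; rewrite mxE. Qed.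

Lemma sum_ndelta (I : finType) (F : I -> C) (x : I) :
  \sum_i F i * ((i == x) : nat)%:R = F x.
Proof.
rewrite (bigD1 x) //= eqxx mulr1 big1 ?addr0 // => i /negbTE ->; by rewrite mulr0.
Qed.

Lemma re4 (a b c e : C) : a * (b * (c * e)) = (b * a * e) * c.
Proof. ring. Qed.

Lemma pauli_expand (A : 'M[C]_N) : \sum_Q hat A Q *: P_ Q = (N%:R : C) *: A.
Proof.
apply/matrixP => x y; rewrite summxE mxE.
under eq_bigr => Q _ do rewrite mxE hatE big_distrl /=.
under eq_bigr => Q _ do under eq_bigr => i _ do rewrite big_distrl /=.
rewrite exchange_big /=.
under eq_bigr => i _ do rewrite exchange_big /=.
under eq_bigr => i _ do under eq_bigr => j _ do
  (rewrite (eq_bigr (fun Q => A i j * (P_ Q j i * P_ Q x y))); last by move=> Q _; rewrite mulrA).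
under eq_bigr => i _ do under eq_bigr => j _ do rewrite -mulr_sumr pauli_compl.
under eq_bigr => i _ do under eq_bigr => j _ do rewrite re4.
under eq_bigr => i _ do rewrite sum_ndelta.
by rewrite sum_ndelta.
Qed.

Lemma hat_compl (A B : 'M[C]_N) : \sum_Q hat A Q * hat B Q = (N%:R : C) * \tr (A *m B).
Proof.
rewrite -mxtraceZ scalemxAl -pauli_expand mulmx_suml raddf_sum /=.
apply: eq_bigr => Q _; rewrite -scalemxAl mxtraceZ /hat; congr (_ * _).
by rewrite mxtrace_mulC.
Qed.

Lemma tr_pauli (P : pl) : \tr (P_ P) = (N%:R : C) * ((P == lab0) : nat)%:R.
Proof.
rewrite /mxtrace.
under eq_bigr => i _ do rewrite pauliE.
rewrite (sum_prod_bits (fun k b => p1 (P k) b b)).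
under eq_bigr => k _ do rewrite s2.
rewrite big_split /= prodr_const card_ord natrX -(prod_eq_ffun _ P lab0).
by congr (_ * _); apply: eq_bigr => k _; rewrite ffunE.
Qed.

Definition chi (P Q : pl) : R := \prod_(k < n) chi1 R (P k) (Q k).

Lemma pauli_conj (P Q : pl) : P_ P *m P_ Q *m P_ P = real_complex R (chi P Q) *: P_ Q.
Proof.
apply/matrixP => x y; rewrite !mxE.
under eq_bigr => v _ do rewrite mxE big_distrl /=.
rewrite exchange_big /=.
under eq_bigr => u _ do under eq_bigr => v _ do rewrite !pauliE -!big_split /=.
rewrite (sum2_prod_bits (fun k b c => p1 (P k) (qbit k x) b * p1 (Q k) b c * p1 (P k) c (qbit k y))).
rewrite (eq_bigr (fun k => real_complex R (chi1 R (P k) (Q k)) * p1 (Q k) (qbit k x) (qbit k y))); last by move=> k _; exact: s4.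
by rewrite big_split /= rmorph_prod.
Qed.

Lemma chi_orth (Q S : pl) : \sum_(P : pl) chi P Q * chi P S = (4 ^ n)%:R * ((Q == S) : nat)%:R.
Proof.
under eq_bigr => P _ do rewrite /chi -big_split /=.
rewrite -(bigA_distr_bigA (fun (m : 'I_n) a => chi1 R a (Q m) * chi1 R a (S m))) /=.
under eq_bigr => m _ do rewrite s5.
by rewrite big_split /= prodr_const card_ord natrX prod_eq_ffun.
Qed.

Lemma pauli_herm (P : pl) : dagger (P_ P) = P_ P.
Proof.
apply/matrixP => i j; rewrite /dagger !mxE rmorph_prod.
by apply: eq_bigr => k _; exact: s3.
Qed.
End Multi.

Section Dag.
Variable R : realType.
Local Notation C := R[i].

Lemma dagger_mul m p q (A : 'M[C]_(m, p)) (B : 'M[C]_(p, q)) :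
  dagger (A *m B) = dagger B *m dagger A.
Proof. by rewrite /dagger map_mxM trmx_mul. Qed.

Lemma daggerK m p (A : 'M[C]_(m, p)) : dagger (dagger A) = A.
Proof. by apply/matrixP => i j; rewrite /dagger !mxE conjcK. Qed.

Lemma daggerD m p (A B : 'M[C]_(m, p)) : dagger (A + B) = dagger A + dagger B.
Proof. by apply/matrixP => i j; rewrite /dagger !mxE rmorphD. Qed.

Lemma daggerZ m p (a : C) (A : 'M[C]_(m, p)) : dagger (a *: A) = conjc a *: dagger A.
Proof. by apply/matrixP => i j; rewrite /dagger !mxE rmorphM. Qed.

Lemma daggerN m p (A : 'M[C]_(m, p)) : dagger (- A) = - dagger A.
Proof. by apply/matrixP => i j; rewrite /dagger !mxE rmorphN. Qed.

Lemma tr_dagger m (A : 'M[C]_m) : \tr (dagger A) = conjc (\tr A).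
Proof. by rewrite /dagger mxtrace_tr /mxtrace rmorph_sum; apply: eq_bigr => i _; rewrite mxE. Qed.

Lemma real_of_conj (z : C) : conjc z = z -> z = real_complex R (complex.Re z).
Proof.
case: z => a b /= [] h; congr Complex.
have : b + b = 0 by rewrite -{1}h addNr.
by move=> hb; lra.
Qed.

Lemma Re_Cmul (a : R) (z : C) : complex.Re (real_complex R a * z) = a * complex.Re z.
Proof. by case: z => x y /=; rewrite mul0r subr0. Qed.

Lemma Re_C (a : R) : complex.Re (real_complex R a) = a.
Proof. by []. Qed.

Lemma Re_add (z w : C) : complex.Re (z + w) = complex.Re z + complex.Re w.
Proof. by case: z; case: w. Qed.

Lemma Re_sum (I : finType) (F : I -> C) : complex.Re (\sum_i F i) = \sum_i complex.Re (F i).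
Proof.
apply: (big_ind2 (fun z x => complex.Re z = x)) => //.
by move=> z1 x1 z2 x2 <- <-; rewrite Re_add.
Qed.

Lemma Re_opp (z : C) : complex.Re (- z) = - complex.Re z.
Proof. by case: z. Qed.

Lemma Re_ge0 (z : C) : 0 <= z -> 0 <= complex.Re z.
Proof. by rewrite lecE => /andP[_]. Qed.

End Dag.

Section XiLemmas.
Variable R : realType.
Variable n : nat.
Local Notation C := R[i].
Local Notation pl := (pauli_label n).
Local Notation P_ := (@pauli R n).
Local Notation N := (2 ^ n)%N.
Local Notation hat := (@hat R n).
Local Notation toC := (real_complex R).

Lemma N_neq0 : (N%:R : C) != 0.
Proof. by rewrite pnatr_eq0 expn_eq0. Qed.

Lemma NR_gt0 : 0 < (N%:R : R).
Proof. by rewrite ltr0n expn_gt0. Qed.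

Lemma hat_conj (A : 'M[C]_N) P : herm_op A -> conjc (hat A P) = hat A P.
Proof.
move=> hA; rewrite /hat -tr_dagger dagger_mul pauli_herm hA.
by rewrite mxtrace_mulC.
Qed.

Lemma hat_real (A : 'M[C]_N) P : herm_op A -> hat A P = toC (Xi A P).
Proof. by move=> hA; rewrite {1}(real_of_conj (hat_conj P hA)). Qed.

Lemma natrC k : (k%:R : C) = toC (k%:R).
Proof. by rewrite rmorph_nat. Qed.

Lemma Xi_sum (A B : 'M[C]_N) : herm_op A -> herm_op B ->
  \sum_P Xi A P * Xi B P = N%:R * complex.Re (\tr (A *m B)).
Proof.
move=> hA hB; have := hat_compl A B.
under eq_bigr => P _ do rewrite (hat_real P hA) (hat_real P hB) -rmorphM.
rewrite -rmorph_sum natrC => /(congr1 (@complex.Re R)).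
by rewrite Re_C Re_Cmul.
Qed.

Lemma Xi_lab0 (A : 'M[C]_N) : Xi A (lab0 n) = complex.Re (\tr A).
Proof. by rewrite /Xi pauli0 mulmx1. Qed.

Lemma Xi_ringed (A : 'M[C]_N) P :
  Xi (ringed A) P = Xi A P - ((P == lab0 n) : nat)%:R.
Proof.
rewrite /Xi /ringed mulmxBl raddfB /= mul_scalar_mx mxtraceZ.
rewrite -/(P_ P) tr_pauli -natrM natrC -rmorphM Re_add Re_opp Re_C.
rewrite natrM mulrA /qdim mulVf ?mul1r //.
Qed.

Lemma expand_inv (B : 'M[C]_N) : B = (N%:R : C)^-1 *: \sum_Q hat B Q *: P_ Q.
Proof. by rewrite pauli_expand scalerA mulVf ?scale1r // N_neq0. Qed.

Lemma tr_conj (A B : 'M[C]_N) P :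
  \tr (A *m P_ P *m B *m P_ P) =
  (N%:R : C)^-1 * \sum_Q hat B Q * toC (chi R P Q) * hat A Q.
Proof.
rewrite -!mulmxA [B in P_ P *m (B *m _)]expand_inv.
rewrite -scalemxAl -scalemxAr -scalemxAr mxtraceZ; congr (_ * _).
rewrite mulmx_suml mulmx_sumr mulmx_sumr raddf_sum /=; apply: eq_bigr => Q _.
rewrite -scalemxAl -scalemxAr mulmxA pauli_conj -scalemxAr mxtraceZ.
rewrite -scalemxAr mxtraceZ mulrA; congr (_ * _).
Qed.

Lemma tXi_formula (A B : 'M[C]_N) P : herm_op A -> herm_op B ->
  tXi A B P = (N%:R : R)^-1 * \sum_Q chi R P Q * (Xi A Q * Xi B Q).
Proof.
move=> hA hB; rewrite /tXi -/(P_ P) tr_conj.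
under eq_bigr => Q _ do rewrite (hat_real Q hA) (hat_real Q hB) -!rmorphM.
rewrite -rmorph_sum natrC -rmorphV ?unitfE ?pnatr_eq0 ?expn_eq0 // Re_Cmul Re_C.
congr (_ * _); apply: eq_bigr => Q _; ring.
Qed.
End XiLemmas.

Section PSD.
Variable R : realType.
Variable n : nat.
Local Notation C := R[i].
Local Notation pl := (pauli_label n).
Local Notation P_ := (@pauli R n).
Local Notation N := (2 ^ n)%N.
Local Notation hat := (@hat R n).
Local Notation toC := (real_complex R).

Lemma conj_ge0c (a : C) : 0 <= a -> conjc a = a.
Proof.
case: a => x y; rewrite lecE /= => /andP[/eqP hy _].
by rewrite hy /= oppr0.
Qed.

Lemma psd_entry (rho M : 'M[C]_N) i :
  (dagger M *m rho *m M) i i = (dagger (col i M) *m rho *m col i M) 0 0.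
Proof.
rewrite !mxE; apply: eq_bigr => j _; rewrite !mxE; congr (_ * _).
by apply: eq_bigr => k _; rewrite /dagger !mxE.
Qed.

Lemma psd_tr (rho M : 'M[C]_N) :
  (forall v : 'cV[C]_N, 0 <= (dagger v *m rho *m v) 0 0) ->
  0 <= \tr (dagger M *m rho *m M).
Proof.
move=> h; rewrite /mxtrace; apply: sumr_ge0 => i _; rewrite psd_entry; exact: h.
Qed.

Lemma chi_lab0 (P : pl) : chi R P (lab0 n) = 1.
Proof. by rewrite /chi big1 // => k _; rewrite ffunE /chi1 /= orbT. Qed.

Lemma pauli_sq (P : pl) : P_ P *m P_ P = 1%:M.
Proof.
have := pauli_conj R P (lab0 n); rewrite pauli0 mulmx1 chi_lab0 => ->.
by rewrite rmorph1 scale1r.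
Qed.

Lemma dagger1 : dagger (1%:M : 'M[C]_N) = 1%:M.
Proof. by rewrite /dagger map_mx1 trmx1. Qed.

Lemma Xi_bound (rho : 'M[C]_N) P : density_op rho -> -1 <= Xi rho P <= 1.
Proof.
move=> [hh [hp ht]].
have hM : forall M : 'M[C]_N, dagger M = M -> M *m M = M + M ->
    0 <= complex.Re (\tr (rho *m M)).
  move=> M hM hMM.
  have := psd_tr M hp; rewrite hM mxtrace_mulC mulmxA hMM mulmxDl mxtraceD => h.
  have := Re_ge0 h; rewrite Re_add mxtrace_mulC => h'; lra.
have h1 : 0 <= complex.Re (\tr (rho *m (1%:M + P_ P))).
  apply: hM; first by rewrite daggerD dagger1 pauli_herm.
  by rewrite mulmxDl !mulmxDr !mul1mx !mulmx1 pauli_sq [P_ P + 1%:M]addrC.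
have h2 : 0 <= complex.Re (\tr (rho *m (1%:M - P_ P))).
  apply: hM; first by rewrite daggerD dagger1 daggerN pauli_herm.
  by rewrite mulmxBl !mulmxBr !mul1mx !mulmx1 pauli_sq opprB.
rewrite mulmxDr mulmxBr mulmx1 mxtraceD raddfB /= ?Re_add ?Re_opp ht in h1 h2.
rewrite /Xi; apply/andP; split; rewrite /= in h1 h2; lra.
Qed.

Lemma conjcN (x : C) : conjc (- x) = - conjc x.
Proof. by case: x => a b; apply/eqP; rewrite eq_complex /= !eqxx. Qed.

Lemma quad_form (rho : 'M[C]_N) i j (x y : C) :
  let v := x *: delta_mx i 0 + y *: delta_mx j 0 : 'cV[C]_N in
  (dagger v *m rho *m v) 0 0 = conjc x * x * rho i i + conjc x * y * rho i j
     + conjc y * x * rho j i + conjc y * y * rho j j.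
Proof.
move=> v.
have hd : forall k, dagger (delta_mx k 0 : 'cV[C]_N) = delta_mx 0 k.
  by move=> k; rewrite /dagger map_delta_mx trmx_delta.
have he : forall k l, ((delta_mx 0 k : 'rV[C]_N) *m rho *m (delta_mx l 0 : 'cV[C]_N)) 0 0 = rho k l.
  by move=> k l; rewrite -rowE -colE !mxE.
rewrite /v daggerD !daggerZ !hd !mulmxDl !mulmxDr.
have he' : forall k l, ((delta_mx 0 k : 'rV[C]_N) *m rho *m (delta_mx l 0 : 'cV[C]_N)) = (rho k l)%:M.
  by move=> k l; apply/matrixP => a c; rewrite !ord1 he mxE eqxx mulr1n.
rewrite -!scalemxAl -!scalemxAr !he' !mxE eqxx !mulr1n.
ring.
Qed.

Lemma herm_entry (rho : 'M[C]_N) i j : herm_op rho -> rho j i = conjc (rho i j).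
Proof. by move=> h; rewrite -{1}h /dagger !mxE. Qed.

Lemma minor2 (rho : 'M[C]_N) i j : density_op rho ->
  rho i j * rho j i <= rho i i * rho j j.
Proof.
move=> [hh [hp _]].
set z := rho i j; set a := rho i i; set b := rho j j.
have hw : rho j i = conjc z by rewrite herm_entry.
have Q := fun x y => hp (x *: delta_mx i 0 + y *: delta_mx j 0).
have ha : 0 <= a.
  by have := Q 1 0; rewrite quad_form rmorph1 rmorph0 ?(mul0r,mulr0,addr0,add0r,mul1r,mulr1).
have hb : 0 <= b.
  by have := Q 0 1; rewrite quad_form rmorph1 rmorph0 ?(mul0r,mulr0,addr0,add0r,mul1r,mulr1).
have hzw : 0 <= z * conjc z by apply: mulcJ_ge0.
rewrite hw.
have [ha0|hapos] : a = 0 \/ 0 < a.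
  by move: ha; rewrite le0r => /orP[/eqP|]; [left|right].
- have [hb0|hbpos] : b = 0 \/ 0 < b.
    by move: hb; rewrite le0r => /orP[/eqP|]; [left|right].
  + have := Q 1 (- conjc z); rewrite quad_form hw rmorph1 conjcN conjcK.
    rewrite -/a -/b ha0 hb0 !mulr0 !mul1r add0r addr0 => h.
    have h2 : z * conjc z + z * conjc z <= 0.
      rewrite -oppr_ge0 opprD; by move: h; rewrite -/z mulr1 !mulNr [conjc z * z]mulrC.
    by apply: le_trans h2; rewrite lerDl.
  + have := Q b (- conjc z); rewrite quad_form hw conjcN conjcK (conj_ge0c hb) -/a -/b => h.
    rewrite -subr_ge0 -(pmulr_rge0 _ hbpos); move: h.
    by rewrite ha0 -/z => h; apply: (le_trans h); rewrite le_eqVlt; apply/orP; left; apply/eqP; ring.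
- have := Q (- z) a; rewrite quad_form hw conjcN (conj_ge0c ha) -/a -/b => h.
  rewrite -subr_ge0 -(pmulr_rge0 _ hapos); move: h.
  by rewrite -/z => h; apply: (le_trans h); rewrite le_eqVlt; apply/orP; left; apply/eqP; ring.
Qed.

Lemma purity_le1 (rho : 'M[C]_N) : density_op rho -> purity rho <= 1.
Proof.
move=> hd; have ht := hd.2.2.
have : \tr (rho *m rho) <= \tr rho * \tr rho.
  rewrite /mxtrace mulr_suml; apply: ler_sum => i _.
  rewrite mxE mulr_sumr; apply: ler_sum => j _; exact: minor2.
rewrite ht mulr1 lecE => /andP[_]; by [].
Qed.
End PSD.
Section Pure.
Variable R : realType.
Variable n : nat.
Local Notation C := R[i].
Local Notation pl := (pauli_label n).
Local Notation P_ := (@pauli R n).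
Local Notation N := (2 ^ n)%N.
Local Notation hat := (@hat R n).
Local Notation toC := (real_complex R).
Variable phi : 'cV[C]_N.
Hypothesis hphi : unit_vec phi.
Local Notation rho := (ketbra phi).

Lemma dphi1 : dagger phi *m phi = 1%:M.
Proof. by rewrite [LHS]mx11_scalar hphi. Qed.

Lemma ketbra_herm : herm_op rho.
Proof. by rewrite /herm_op /ketbra dagger_mul daggerK. Qed.

Lemma ketbra_tr : \tr rho = 1.
Proof. by rewrite /ketbra mxtrace_mulC dphi1 mxtrace1. Qed.

Lemma ketbra_sq : rho *m rho = rho.
Proof. by rewrite /ketbra mulmxA -[phi *m _ *m phi]mulmxA dphi1 mulmx1. Qed.

Lemma ketbra_density : density_op rho.
Proof.
split; first exact: ketbra_herm.
split; last exact: ketbra_tr.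
move=> v; rewrite /ketbra !mulmxA -(mulmxA (dagger v *m phi)).
have -> : dagger phi *m v = dagger (dagger v *m phi) by rewrite dagger_mul daggerK.
rewrite mxE big_ord1 /dagger !mxE; exact: mulcJ_ge0.
Qed.

Lemma ketbra_purity : purity rho = 1.
Proof. by rewrite /purity ketbra_sq ketbra_tr. Qed.

Lemma tr_pure P : \tr (rho *m P_ P *m rho *m P_ P) = hat rho P * hat rho P.
Proof.
rewrite /ketbra.
have -> : phi *m dagger phi *m P_ P *m (phi *m dagger phi) *m P_ P
   = phi *m (dagger phi *m P_ P *m phi) *m (dagger phi *m P_ P) by rewrite !mulmxA.
rewrite [dagger phi *m P_ P *m phi]mx11_scalar mul_mx_scalar -scalemxAl mxtraceZ.
rewrite /hat mulmxA; congr (_ * _).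
by rewrite -[in RHS]mulmxA [in RHS]mxtrace_mulC /mxtrace big_ord1.
Qed.

Lemma tXi_pure P : tXi rho (ringed rho) P = Xi rho P ^+ 2 - (qdim R n)^-1.
Proof.
rewrite /tXi /ringed mulmxBr scalar_mxC mul_scalar_mx mulmxBl -scalemxAl.
rewrite -[rho *m P_ P *m P_ P]mulmxA pauli_sq mulmx1 raddfB /= mxtraceZ ketbra_tr mulr1.
rewrite -/(P_ P) tr_pure (hat_real P ketbra_herm) -rmorphM -rmorphB.
by rewrite Re_C expr2.
Qed.
End Pure.

Section RealLemmas.
Variable R : realType.

Lemma sum2_prodR (T : finType) (f g : T -> R) :
  \sum_i \sum_j f i * g j = (\sum_i f i) * (\sum_j g j).
Proof. by rewrite mulr_suml; apply: eq_bigr => i _; rewrite mulr_sumr. Qed.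

Lemma CS (T : finType) (a b : T -> R) :
  (\sum_i a i * b i) ^+ 2 <= (\sum_i a i ^+ 2) * (\sum_i b i ^+ 2).
Proof.
have h : 0 <= \sum_i \sum_j (a i * b j - a j * b i) ^+ 2.
  by apply: sumr_ge0 => i _; apply: sumr_ge0 => j _; exact: sqr_ge0.
have e : \sum_i \sum_j (a i * b j - a j * b i) ^+ 2 =
   \sum_i \sum_j (a i ^+ 2 * b j ^+ 2) + \sum_i \sum_j (b i ^+ 2 * a j ^+ 2)
   - 2 * \sum_i \sum_j ((a i * b i) * (a j * b j)).
  rewrite mulr_sumr -!big_split -sumrB /=; apply: eq_bigr => i _.
  rewrite mulr_sumr -!big_split -sumrB /=; apply: eq_bigr => j _; ring.
rewrite e !sum2_prodR -expr2 in h.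
lra.
Qed.

Lemma sum_ndeltaR (I : finType) (F : I -> R) (x : I) :
  \sum_i F i * ((i == x) : nat)%:R = F x.
Proof.
rewrite (bigD1 x) //= eqxx mulr1 big1 ?addr0 // => i /negbTE ->; by rewrite mulr0.
Qed.

Lemma le_sqrt_sq (x y : R) : 0 <= y -> x ^+ 2 <= y -> x <= Num.sqrt y.
Proof.
move=> hy hxy; apply: (le_trans (ler_norm x)).
by rewrite -sqrtr_sqr ler_sqrt.
Qed.

Lemma sq_le_sq (x y : R) : 0 <= y -> x ^+ 2 <= y ^+ 2 -> x <= y.
Proof. move=> hy h; nra. Qed.

Lemma bigmax_ge0 (T : finType) (P : pred T) (F : T -> R) :
  0 <= \big[Num.max/0]_(i | P i) F i.
Proof.
elim/big_rec: _ => // i y _ hy; by rewrite le_max hy orbT.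
Qed.

Lemma sumS_le (T : finType) (S : {set T}) (g : T -> R) :
  (forall P, 0 <= g P) -> \sum_(P in S) g P <= \sum_P g P.
Proof.
move=> hg; rewrite big_mkcond /=; apply: ler_sum => P _.
by case: (P \in S).
Qed.

Lemma sumS_CS (T : finType) (S : {set T}) (g : T -> R) :
  (\sum_(P in S) g P) ^+ 2 <= #|S|%:R * \sum_P g P ^+ 2.
Proof.
have := CS (fun P => if P \in S then (1:R) else 0) (fun P => if P \in S then g P else 0).
have e1 : \sum_i (if i \in S then (1:R) else 0) * (if i \in S then g i else 0) = \sum_(P in S) g P.
  by rewrite [RHS]big_mkcond /=; apply: eq_bigr => i _; case: (i \in S); rewrite ?mul1r ?mul0r.
have e2 : \sum_i (if i \in S then (1:R) else 0) ^+ 2 = #|S|%:R.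
  rewrite (eq_bigr (fun i => if i \in S then (1:R) else 0)); last by move=> i _; case: (i \in S); rewrite ?expr1n ?expr0n.
  by rewrite -big_mkcond /= sumr_const.
rewrite e1 e2 => h; apply: (le_trans h); apply: ler_wpM2l => //.
apply: ler_sum => i _; case: (i \in S) => //; by rewrite expr0n /= sqr_ge0.
Qed.

Lemma knapsack (T : finType) (m : nat) (f y : T -> R) :
  (0 < m)%N -> (m <= #|T|)%N -> (forall P, 0 <= f P) -> (forall P, 0 <= y P <= 1) ->
  \sum_P y P <= m%:R ->
  \sum_P y P * f P <= \big[Num.max/0]_(S : {set T} | #|S| == m) \sum_(P in S) f P.
Proof.
move=> hm hmT hf hy hsy.
pose r := fun a b : T => f b <= f a.
have rtr : transitive r by move=> b a c; rewrite /r => h1 h2; exact: le_trans h2 h1.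
have rtot : total r by move=> a b; rewrite /r le_total.
pose s := sort r (enum T).
have hs : pairwise r s by rewrite -sorted_pairwise // sort_sorted.
have hsz : size s = #|T| by rewrite size_sort cardT.
pose S := [set x in take m s].
have hcard : #|S| = m.
  have hu : uniq s by rewrite sort_uniq enum_uniq.
  rewrite cardsE; move/card_uniqP: (take_uniq m hu) => ->.
  by rewrite size_takel // hsz.
have hsplit : forall a b, a \in S -> b \notin S -> f b <= f a.
  move=> a b ha hb.
  move: hs; rewrite -(cat_take_drop m s) pairwise_cat => /and3P[/allrelP hall _ _].
  apply: hall; first by move: ha; rewrite inE.
  have : b \in take m s ++ drop m s by rewrite cat_take_drop mem_sort mem_enum.
  rewrite mem_cat => /orP[hbt|] //.
  by move: hb; rewrite inE hbt.
have [a1 ha1] : exists a, a \in S by apply/card_gt0P; rewrite hcard.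
case: (arg_minP f ha1) => a0 ha0 hmin.
set t := f a0.
have ht0 : 0 <= t by apply: hf.
rewrite (bigID (mem S)) /=.
rewrite (bigID (mem S)) /= in hsy.
set A := \sum_(P | P \in S) y P in hsy *.
set B := \sum_(P | P \notin S) y P in hsy *.
have h1 : \sum_(P | P \notin S) y P * f P <= t * B.
  rewrite /B mulr_sumr; apply: ler_sum => P hP.
  have := hy P; have := hsplit a0 P ha0 hP; rewrite -/t => h /andP[h' h'']; nra.
have hS1 : \sum_(P | P \in S) (1 : R) = m%:R by rewrite sumr_const hcard.
have h2 : \sum_(P | P \in S) y P * f P + t * (m%:R - A) <= \sum_(P in S) f P.
  rewrite -hS1 /A -sumrB mulr_sumr -big_split /=; apply: ler_sum => P hP.
  have := hy P; have := hmin P hP; rewrite -/t => h /andP[h' h'']; nra.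
have h3 : 0 <= t * (m%:R - A - B) by apply: mulr_ge0 => //; lra.
have hF : \sum_(P in S) f P <= \big[Num.max/0]_(S0 : {set T} | #|S0| == m) \sum_(P in S0) f P.
  by apply: (@le_bigmax_cond _ _ _ 0 S (fun S0 : {set T} => #|S0| == m) (fun S0 => \sum_(P in S0) f P)); rewrite hcard.
lra.
Qed.
End RealLemmas.

Section PowLemmas.
Variable R : realType.

Lemma ln2_gt0 : 0 < ln (2 : R).
Proof. by apply: ln_gt0; rewrite ltr1n. Qed.

Lemma pow2E (x : R) : 2 `^ x = expR (x * ln 2).
Proof. by rewrite /powR pnatr_eq0. Qed.

Lemma pow2_log (s : R) : 0 < s -> 2 `^ (qlog2 s) = s.
Proof.
move=> hs; rewrite pow2E /qlog2 -mulrA mulVf ?mulr1 ?lnK ?posrE //.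
by rewrite gt_eqF // ln2_gt0.
Qed.

Lemma pow2_1log (s : R) : 0 < s -> 2 `^ (1 + qlog2 s) = 2 * s.
Proof.
move=> hs; rewrite pow2E mulrDl mul1r expRD /qlog2 -mulrA mulVf ?mulr1 ?lnK ?posrE //.
by rewrite gt_eqF // ln2_gt0.
Qed.

Lemma pow2_1log_half (s : R) : 0 < s -> 2 `^ (1 + qlog2 s / 2) = 2 * Num.sqrt s.
Proof.
move=> hs; rewrite pow2E mulrDl mul1r expRD /qlog2.
have -> : ln s / ln 2 / 2 * ln 2 = ln s / 2.
  by field; rewrite gt_eqF // ln2_gt0.
rewrite lnK ?posrE //; congr (_ * _).
have he : expR (ln s / 2) ^+ 2 = s.
  rewrite expr2 -expRD (_ : ln s / 2 + ln s / 2 = ln s) ?lnK ?posrE //. lra.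
by rewrite -{2}he sqrtr_sqr ger0_norm // expR_ge0.
Qed.
End PowLemmas.

Section Main.
Variable R : realType.
Variable n : nat.
Hypothesis hn : (1 <= n)%N.
Local Notation C := R[i].
Local Notation pl := (pauli_label n).
Local Notation P_ := (@pauli R n).
Local Notation N := (2 ^ n)%N.
Local Notation d := (qdim R n).
Local Notation c0 := ((d + 1) / (d * (d + 2))).

Lemma d_eq : d = N%:R. Proof. by []. Qed.

Lemma d_ge2 : 2 <= d.
Proof.
rewrite d_eq ler_nat.
by rewrite -{1}(expn1 2) leq_exp2l.
Qed.

Lemma c0_ge0 : 0 <= c0.
Proof. have := d_ge2 => h; apply: divr_ge0; [lra | apply: mulr_ge0; lra]. Qed.

Lemma dot_le (rho O : 'M[C]_N) : herm_op rho -> herm_op O ->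
  dotP (tXi rho O) (Xi2 rho O) <= norm2sq (Xi2 rho O).
Proof.
move=> hr hO.
set w := Xi2 rho O.
have ht : forall P, tXi rho O P = (N%:R)^-1 * \sum_Q chi R P Q * w Q.
  by move=> P; rewrite tXi_formula.
have hsq : \sum_P (tXi rho O P) ^+ 2 = \sum_P w P ^+ 2.
  under eq_bigr => P _ do rewrite ht exprMn [(\sum_(Q : pl) _) ^+ 2]expr2 -sum2_prodR.
  rewrite -mulr_sumr exchange_big /=.
  under eq_bigr => Q _ do rewrite exchange_big /=.
  under eq_bigr => Q _ do under eq_bigr => S _ do
    (rewrite (eq_bigr (fun P => w Q * w S * (chi R P Q * chi R P S))); last by move=> P _; ring).
  under eq_bigr => Q _ do under eq_bigr => S _ do rewrite -mulr_sumr chi_orth eq_sym mulrA.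
  under eq_bigr => Q _ do rewrite sum_ndeltaR.
  have h4 : (N%:R : R)^-1 ^+ 2 * (4 ^ n)%:R = 1.
    rewrite (_ : (4 ^ n)%N = N ^ 2)%N; last by rewrite -expnM mulnC expnM.
    by rewrite (natrX _ N 2) exprVn mulVf // expf_neq0 // pnatr_eq0 expn_eq0.
  rewrite -mulr_suml mulrCA h4 mulr1.
  by apply: eq_bigr => Q _; rewrite expr2.
have hW : 0 <= norm2sq w by apply: sumr_ge0 => P _; exact: sqr_ge0.
apply: sq_le_sq => //.
have := CS (tXi rho O) w; rewrite hsq -/(norm2sq w) -expr2 //.
Qed.

Lemma Vtri_le (rho O : 'M[C]_N) : herm_op rho -> herm_op O ->
  Vtri O rho <= 2 * c0 * norm2sq (Xi2 rho O).
Proof.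
move=> hr hO; rewrite /Vtri; have := dot_le hr hO; have := c0_ge0 => h0 h1.
rewrite -/d; nra.
Qed.

Lemma W_eq (rho O : 'M[C]_N) :
  norm2sq (Xi2 rho O) = \sum_P Xi rho P ^+ 2 * Xi O P ^+ 2.
Proof. by apply: eq_bigr => P _; rewrite /Xi2 exprMn. Qed.

Lemma sq_sum (A : 'M[C]_N) : herm_op A ->
  \sum_P Xi A P ^+ 2 = N%:R * complex.Re (\tr (A *m A)).
Proof. by move=> h; rewrite -Xi_sum //; apply: eq_bigr => P _; rewrite expr2. Qed.

Lemma r0 (rho : 'M[C]_N) : density_op rho -> Xi rho (lab0 n) = 1.
Proof. by move=> [_ [_ ht]]; rewrite Xi_lab0 ht. Qed.

Lemma sum_lab0 (F : pl -> R) : \sum_P F P = F (lab0 n) + \sum_(P | P != lab0 n) F P.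
Proof. by rewrite (bigD1 (lab0 n)). Qed.

Lemma purity_gt0 (rho : 'M[C]_N) : density_op rho -> 0 < purity rho.
Proof.
move=> hd; have := sq_sum hd.1; rewrite sum_lab0 r0 // expr1n => h.
have : 0 <= \sum_(P | P != lab0 n) Xi rho P ^+ 2 by apply: sumr_ge0 => P _; exact: sqr_ge0.
have hN := NR_gt0 R n.
rewrite /purity; move: h; set p := complex.Re _ => h h'.
have : 0 < N%:R * p by lra.
by rewrite pmulr_rgt0.
Qed.

Lemma hs_sq (O : 'M[C]_N) : herm_op O -> hs_norm O ^+ 2 = complex.Re (\tr (O *m O)).
Proof.
move=> hO; rewrite /hs_norm hO sqr_sqrtr //.
have := sq_sum hO; have hN := NR_gt0 R n => h.
have : 0 <= \sum_P Xi O P ^+ 2 by apply: sumr_ge0 => P _; exact: sqr_ge0.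
rewrite h pmulr_rge0 //.
Qed.

Lemma o_sq_sum (O : 'M[C]_N) : herm_op O ->
  \sum_P Xi O P ^+ 2 = N%:R * hs_norm O ^+ 2.
Proof. by move=> hO; rewrite hs_sq // sq_sum. Qed.

Lemma F4_ge1 (rho : 'M[C]_N) : density_op rho -> 1 <= norm4pow4 (Xi rho).
Proof.
move=> hd; rewrite /norm4pow4 sum_lab0 r0 // expr1n lerDl.
by apply: sumr_ge0 => P _; rewrite (_ : 4 = 2 * 2)%N // exprM sqr_ge0.
Qed.

Lemma part1a (rho O : 'M[C]_N) : herm_op O -> density_op rho ->
  Vtri O rho <= 2 * (d + 1) / (d * (d + 2)) *
        Num.sqrt (2 `^ (- M2t rho) * d * purity rho * norm4pow4 (Xi O)).
Proof.
move=> hO hd.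
have hp := purity_gt0 hd.
have hF := F4_ge1 hd.
have hN := NR_gt0 R n.
have e : 2 `^ (- M2t rho) * d * purity rho = norm4pow4 (Xi rho).
  rewrite /M2t opprK pow2_log; last first.
    by apply: divr_gt0; [lra | apply: mulr_gt0].
  have hd0 : d != 0 by rewrite d_eq gt_eqF.
  by rewrite -mulrA divfK // mulf_neq0 // gt_eqF.
rewrite e.
apply: (le_trans (Vtri_le hd.1 hO)).
rewrite mulrA; apply: ler_wpM2l.
  by rewrite -mulrA mulr_ge0 // c0_ge0.
apply: le_sqrt_sq.
  by apply: mulr_ge0; apply: sumr_ge0 => P _; rewrite (_ : 4 = 2 * 2)%N // exprM sqr_ge0.
rewrite W_eq; apply: (le_trans (CS _ _)).
have e4 : forall f : pl -> R, norm4pow4 f = \sum_P f P ^+ 2 ^+ 2.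
  by move=> f; apply: eq_bigr => P _; rewrite -exprM.
by rewrite !e4.
Qed.

Lemma d_neq0 : d != 0. Proof. by rewrite d_eq gt_eqF // NR_gt0. Qed.
Lemma d2_neq0 : d + 2 != 0. Proof. have h := d_ge2; rewrite gt_eqF //; lra. Qed.

Lemma part1b (rho O : 'M[C]_N) : herm_op O -> \tr O = 0 -> density_op rho ->
  Vtri O rho <= 2 * (d + 1) / (d + 2) *
        norminf (Xi (ringed rho)) ^+ 2 * hs_norm O ^+ 2.
Proof.
move=> hO trO hd.
set m := norminf (Xi (ringed rho)).
have hW : norm2sq (Xi2 rho O) <= m ^+ 2 * (N%:R * hs_norm O ^+ 2).
  rewrite W_eq -o_sq_sum // mulr_sumr; apply: ler_sum => P _.
  case: (eqVneq P (lab0 n)) => [->|hP].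
    by rewrite [Xi O _]Xi_lab0 trO /= expr0n /= !mulr0.
  have hm : `|Xi rho P| <= m.
    have := le_bigmax 0 (fun P => `|Xi (ringed rho) P|) P.
    by rewrite Xi_ringed (negbTE hP) subr0.
  apply: ler_wpM2r; first exact: sqr_ge0.
  move: hm; rewrite ler_norml => /andP[h1 h2]; nra.
apply: (le_trans (Vtri_le hd.1 hO)).
have h2c : 0 <= 2 * c0 by rewrite mulr_ge0 // c0_ge0.
apply: (le_trans (ler_wpM2l h2c hW)).
rewrite le_eqVlt; apply/orP; left; apply/eqP.
rewrite -d_eq; field.
by rewrite d_neq0 d2_neq0.
Qed.

Lemma W_le_topd (rho O : 'M[C]_N) : density_op rho ->
  norm2sq (Xi2 rho O) <= topd (Xi O).
Proof.
move=> hd; rewrite W_eq /topd.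
apply: knapsack.
- by rewrite expn_gt0.
- by rewrite card_ffun !card_ord leq_exp2r.
- by move=> P; exact: sqr_ge0.
- by move=> P; have := Xi_bound P hd => /andP[h1 h2]; apply/andP; split; [exact: sqr_ge0 | nra].
- rewrite sq_sum ?hd.1 // -/(purity rho); have := purity_le1 hd; have := NR_gt0 R n => h1 h2.
  nra.
exact: hd.1. Qed.

Lemma part2 (O : 'M[C]_N) : herm_op O ->
  Vmax O <= 2 * (d + 1) / (d * (d + 2)) * topd (Xi O).
Proof.
move=> hO.
have hc1 : 0 <= 2 * (d + 1) / (d * (d + 2)) by rewrite -mulrA mulr_ge0 // c0_ge0.
have htop : 0 <= topd (Xi O) by apply: bigmax_ge0.
rewrite /Vmax.
set E := ([set Vtri O rho | rho in [set rho | density_op rho]])%classic.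
have [hE|hE] := pselect (E = set0).
  by rewrite hE sup0 mulr_ge0.
apply: ge_sup; first by apply/set0P/eqP.
move=> y [rho hrho <-].
apply: (le_trans (Vtri_le hrho.1 hO)).
rewrite mulrA; apply: ler_wpM2l => //.
exact: W_le_topd.
Qed.

Lemma part3 (O : 'M[C]_N) : herm_op O ->
  2 * (d + 1) / (d * (d + 2)) * topd (Xi O) <= 2 * (d + 1) / (d + 2) * hs_norm O ^+ 2.
Proof.
move=> hO.
have hc1 : 0 <= 2 * (d + 1) / (d * (d + 2)) by rewrite -mulrA mulr_ge0 // c0_ge0.
have ht : topd (Xi O) <= N%:R * hs_norm O ^+ 2.
  rewrite -o_sq_sum //; apply: bigmax_le.
    by apply: sumr_ge0 => P _; exact: sqr_ge0.
  by move=> S _; apply: sumS_le => P; exact: sqr_ge0.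
apply: (le_trans (ler_wpM2l hc1 ht)).
rewrite le_eqVlt; apply/orP; left; apply/eqP.
rewrite -d_eq; field.
by rewrite d_neq0 d2_neq0.
Qed.

Section PureSec.
Variable phi : 'cV[C]_N.
Hypothesis hphi : unit_vec phi.
Variable O : 'M[C]_N.
Hypothesis hOdef : O = ketbra phi - (real_complex R (d^-1))%:M.
Local Notation rho := (ketbra phi).
Local Notation r := (Xi rho).
Local Notation G := (\sum_(P | P != lab0 n) r P ^+ 4).

Lemma hOr : O = ringed rho. Proof. by rewrite hOdef. Qed.
Lemma hdp : density_op rho. Proof. exact: ketbra_density. Qed.
Lemma r0p : r (lab0 n) = 1. Proof. exact: r0 hdp. Qed.
Lemma hop P : Xi O P = r P - ((P == lab0 n) : nat)%:R.
Proof. by rewrite hOr Xi_ringed. Qed.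
Lemma hop' P : P != lab0 n -> Xi O P = r P.
Proof. by move=> h; rewrite hop (negbTE h) subr0. Qed.

Lemma ho0 : Xi O (lab0 n) = 0.
Proof. by rewrite hop r0p eqxx /= mulr1n subrr. Qed.

Lemma hS2 : \sum_P r P ^+ 2 = N%:R.
Proof.
have hp := ketbra_purity hphi; rewrite /purity in hp.
have hh := ketbra_herm phi.
by rewrite (sq_sum hh) hp mulr1.
Qed.

Lemma hS2' : \sum_(P | P != lab0 n) r P ^+ 2 = N%:R - 1.
Proof. rewrite -hS2 sum_lab0 r0p expr1n; lra. Qed.

Lemma hF : norm4pow4 r = 1 + G.
Proof. by rewrite /norm4pow4 sum_lab0 r0p expr1n. Qed.

Lemma hG0 : 0 <= G.
Proof. by apply: sumr_ge0 => P _; rewrite (_ : 4 = 2 * 2)%N // exprM sqr_ge0. Qed.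

Lemma hGN : G <= N%:R - 1.
Proof.
rewrite -hS2'; apply: ler_sum => P _.
have := Xi_bound P hdp => /andP[h1 h2].
have h3 : r P ^+ 2 <= 1 by nra.
have h4 : 0 <= r P ^+ 2 by exact: sqr_ge0.
rewrite (_ : 4 = 2 + 2)%N // exprD; move: h3 h4; set x := r P ^+ 2 => h3 h4; nra.
Qed.

Lemma hWp : norm2sq (Xi2 rho O) = G.
Proof.
rewrite W_eq sum_lab0 ho0 expr0n /= mulr0 add0r.
by apply: eq_bigr => P hP; rewrite hop' // -exprD.
Qed.

Lemma hO4 : norm4pow4 (Xi O) = G.
Proof.
rewrite /norm4pow4 sum_lab0 ho0 expr0n /= add0r.
by apply: eq_bigr => P hP; rewrite hop'.
Qed.

Lemma hdot : dotP (tXi rho O) (Xi2 rho O) = G - (N%:R - 1) / N%:R.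
Proof.
rewrite /dotP sum_lab0 /Xi2 ho0 mulr0 mulr0 add0r.
rewrite -hS2' mulr_suml -sumrB; apply: eq_bigr => P hP.
have ht := tXi_pure hphi P; rewrite -hOr in ht.
rewrite ht hop' // -d_eq.
by rewrite (_ : 4 = 2 + 2)%N // exprD; ring.
Qed.

Lemma hVp : Vtri O rho = c0 * (G + (G - (N%:R - 1) / N%:R)).
Proof. by rewrite /Vtri hWp hdot. Qed.

Lemma hM2 : M2 phi = - qlog2 ((1 + G) / N%:R).
Proof. by rewrite /M2 /M2t (ketbra_purity hphi) mulr1 hF. Qed.


Lemma part4 : herm_op O ->
  Vmax O < 2 `^ (1 - M2 phi / 2) * (d + 1) / (d + 2)
  /\ 2 `^ (1 - M2 phi) - 5 / d < Vtri O (ketbra phi)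
  /\ Vtri O (ketbra phi)
       = (2 `^ (1 - M2 phi) * d ^+ 2 - 3 * d + 1) * (d + 1) / (d ^+ 2 * (d + 2))
  /\ Vtri O (ketbra phi) < 2 `^ (1 - M2 phi) - 2 / d.
Proof.
move=> hO.
have hD := d_ge2.
have hG0' := hG0.
have hGN' := hGN.
have hD0 := d_neq0.
have hD2 := d2_neq0.
have hN0 : (N%:R : R) != 0 by exact: hD0.
have hN2 : (N%:R : R) + 2 != 0 by exact: hD2.
have hs : 0 < (1 + G) / d by apply: divr_gt0; lra.
have e1 : 2 `^ (1 - M2 phi) = 2 * ((1 + G) / d) by rewrite hM2 opprK pow2_1log.
have e2 : 2 `^ (1 - M2 phi / 2) = 2 * Num.sqrt ((1 + G) / d)
  by rewrite hM2 mulNr opprK pow2_1log_half.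
rewrite e1 e2 hVp -d_eq.
have hden : 0 < d ^+ 2 * (d + 2) by apply: mulr_gt0; [apply: exprn_gt0 | ]; lra.
split; last split; last split.
- have hVm := part2 hO.
  have htop : topd (Xi O) <= Num.sqrt (d * G).
    rewrite /topd; apply: bigmax_le; first exact: sqrtr_ge0.
    move=> S /eqP hS; apply: le_sqrt_sq; first by apply: mulr_ge0; lra.
    have := sumS_CS S (fun P => Xi O P ^+ 2); rewrite hS -d_eq.
    have -> : \sum_P (Xi O P ^+ 2) ^+ 2 = G.
      by rewrite -hO4; apply: eq_bigr => P _; rewrite -exprM.
    by [].
  have hlt : Num.sqrt (d * G) < Num.sqrt (d * (1 + G)).
    by rewrite ltr_sqrt; [lra | apply: mulr_gt0; lra].
  have hsq : Num.sqrt (d * (1 + G)) = d * Num.sqrt ((1 + G) / d).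
    rewrite (_ : d * (1 + G) = d ^+ 2 * ((1 + G) / d)); last by field.
    by rewrite sqrtrM ?sqr_ge0 // sqrtr_sqr ger0_norm //; lra.
  have hc1 : 0 < 2 * (d + 1) / (d * (d + 2)).
    by apply: divr_gt0; [lra | apply: mulr_gt0; lra].
  apply: (le_lt_trans hVm).
  apply: (le_lt_trans (ler_wpM2l (ltW hc1) htop)).
  rewrite -(ltr_pM2l hc1) hsq in hlt.
  apply: (lt_le_trans hlt); rewrite le_eqVlt; apply/orP; left; apply/eqP.
  by field; rewrite ?(hN0, hN2).
- have key : (d + 1) / (d * (d + 2)) * (G + (G - (d - 1) / d)) - (2 * ((1 + G) / d) - 5 / d)
      = (2 * d ^+ 2 + 8 * d + 1 - 2 * (1 + G) * d) / (d ^+ 2 * (d + 2)) by field; rewrite ?(hN0, hN2).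
  have pos : 0 < (2 * d ^+ 2 + 8 * d + 1 - 2 * (1 + G) * d) / (d ^+ 2 * (d + 2)).
    by apply: divr_gt0 => //; nra.
  lra.
- by field; rewrite ?(hN0, hN2).
- have key : (2 * ((1 + G) / d) - 2 / d) - (d + 1) / (d * (d + 2)) * (G + (G - (d - 1) / d))
      = (2 * (1 + G) * d + d ^+ 2 - 2 * d - 1) / (d ^+ 2 * (d + 2)) by field; rewrite ?(hN0, hN2).
  have pos : 0 < (2 * (1 + G) * d + d ^+ 2 - 2 * d - 1) / (d ^+ 2 * (d + 2)).
    by apply: divr_gt0 => //; nra.
  lra.
Qed.
End PureSec.
End Main.
End Helpers.
Import Helpers.

Local Open Scope classical_set_scope.

Theorem mainTheorem16 (R : realType) (n : nat) (hn : (1 <= n)%N)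
  (O : 'M[R[i]]_(2 ^ n)) (hO : herm_op O) (trO : \tr O = 0) :
  let d := qdim R n in
  (forall rho : 'M[R[i]]_(2 ^ n), density_op rho ->
     Vtri O rho <= 2 * (d + 1) / (d * (d + 2)) *
        Num.sqrt (2 `^ (- M2t rho) * d * purity rho * norm4pow4 (Xi O))
     /\ Vtri O rho <= 2 * (d + 1) / (d + 2) *
        norminf (Xi (ringed rho)) ^+ 2 * hs_norm O ^+ 2)
  /\ Vmax O <= 2 * (d + 1) / (d * (d + 2)) * topd (Xi O)
  /\ 2 * (d + 1) / (d * (d + 2)) * topd (Xi O) <= 2 * (d + 1) / (d + 2) * hs_norm O ^+ 2
  /\ (forall phi : 'cV[R[i]]_(2 ^ n), unit_vec phi ->
        O = ketbra phi - (real_complex R (d^-1))%:M ->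
        Vmax O < 2 `^ (1 - M2 phi / 2) * (d + 1) / (d + 2)
        /\ 2 `^ (1 - M2 phi) - 5 / d < Vtri O (ketbra phi)
        /\ Vtri O (ketbra phi)
             = (2 `^ (1 - M2 phi) * d ^+ 2 - 3 * d + 1) * (d + 1) / (d ^+ 2 * (d + 2))
        /\ Vtri O (ketbra phi) < 2 `^ (1 - M2 phi) - 2 / d).
Proof.
move=> d.
split.
  move=> rho hrho; split; [exact: part1a | exact: part1b].
split; first exact: part2.
split; first exact: part3.
move=> phi hphi hOdef; exact: part4.
Qed.
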